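(* Let $G=(V,E)$ be an undirected graph with $|V|=p$ and $\sigma$ an ordering of $V$. If the ordered graph $G_\sigma$ satisfies Property-A and Property-B, then $G$ is a Generalized Bartlett graph and $\sigma$ is a Generalized Bartlett ordering for $G$.
   Context: Ordered graph: $G_\sigma$ has vertices $\{1,\dots,p\}$ and edges $E_\sigma=\{(i,j):(\sigma^{-1}(i),\sigma^{-1}(j))\in E\}$. For $\Omega\in\mathbb{P}_{G_\sigma}$ (symmetric positive definite, $\Omega_{ij}=0$ for $i\ne j$, $(i,j)\notin E_\sigma$) write $\Omega=LDL^T$ (modified Cholesky: $L$ unit lower triangular, $D=\mathrm{diag}(D_1,\dots,D_p)$, $D_i>0$), and set $\widetilde D_1=D_1$, $\widetilde D_k=D_k/D_{k-1}$ ($k\ge2$). The entries $L_I=\{L_{ij}:i>j,(i,j)\in E_\sigma\}$ are independent parameters. For $i>j$ with $(i,j)\notin E_\sigma$, $\Omega_{ij}=0$ gives $L_{ij}=-\sum_{k=1}^{j-1}L_{ik}L_{jk}\prod_{l=k+1}^{j}\widetilde D_l^{-1}$; substituting recursively, each such $L_{ij}$ is a polynomial (its expansion, with like terms collected) in the entries of $L_I$ and $\widetilde D_1^{-1},\dots,\widetilde D_p^{-1}$, each term of the form $\pm\prod_{(r,s)}L_{rs}^{c_{rs}}\prod_k\widetilde D_k^{d_k}$ with $c_{rs}\ge0$, $d_k\le0$ integers. $G_\sigma$ has Property-A if for every $i>j$ with $(i,j)\notin E_\sigma$ every exponent $c_{rs}$ in the expansion of $L_{ij}$ lies in $\{0,1\}$;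 it has Property-B if every exponent $d_k$ in the expansion of every such $L_{ij}$ lies in $\{0,-1\}$. Triangulation: $E^\sigma_0=E$, and for $i=1,\dots,p-2$, $E^\sigma_i=E^\sigma_{i-1}\cup\{\{u,v\}:u\ne v,\sigma(u)>i,\sigma(v)>i,\{u,\sigma^{-1}(i)\},\{v,\sigma^{-1}(i)\}\in E^\sigma_{i-1}\}$; $D^\sigma(E)=E^\sigma_{p-2}$. $\sigma$ is a Generalized Bartlett ordering of $G$ if there are no $u,v,w$ with $\{u,v\},\{v,w\},\{u,w\}\notin E$ but all in $D^\sigma(E)$; $G$ is Generalized Bartlett if such an ordering exists. *)

(* Defs.v *)
From HB Require Import structures.
From mathcomp Require Import all_boot all_order all_algebra fingroup perm.
From mathcomp Require Import mpoly.
Set Implicit Arguments. Unset Strict Implicit. Unset Printing Implicit Defensive.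
Import GRing.Theory.
Local Open Scope ring_scope.

(* Conventions (0-based): vertices of G are 'I_p; the ordering sigma is a
   permutation of 'I_p, sigma u = position of u (paper's sigma(u) minus 1). *)

Definition simple_graph (p : nat) (e : rel 'I_p) : Prop :=
  ssrbool.irreflexive e /\ ssrbool.symmetric e.

Definition Esig (p : nat) (e : rel 'I_p) (s : {perm 'I_p}) : rel 'I_p :=
  fun i j => e ((s^-1)%g i) ((s^-1)%g j).

(* Polynomial ring: variables indexed by 'I_(p*p+p).
   Variable number i*p+j (i,j < p) stands for L_{ij};
   variable number p*p+l (l < p) stands for Dtilde_l^{-1}.  *)
Definition nvars (p : nat) := (p * p + p)%N.
Notation Poly p := {mpoly int[nvars p]}.

Definition Xn (p k : nat) : Poly p :=
  match @insub nat (fun x => x < nvars p)%N 'I_(nvars p) k with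
  | Some o => 'X_o
  | None => 0
  end.

Definition Lvar (p i j : nat) : Poly p := Xn p (i * p + j)%N.
Definition Tvar (p l : nat) : Poly p := Xn p (p * p + l)%N.

(* Lfun n i j is the polynomial L_{ij} for every column j < n. *)
Fixpoint Lfun (p : nat) (E : nat -> nat -> bool) (n : nat) : nat -> nat -> Poly p :=
  match n with
  | 0 => fun _ _ => 0
  | n'.+1 => fun i j =>
      if (j < n')%N then Lfun p E n' i j
      else if (j == n')%N then
        if (i == j)%N then 1
        else if (i < j)%N then 0
        else if E i j then Lvar p i j
        else - \sum_(0 <= k < j)
                 (Lfun p E n' i k * Lfun p E n' j k *
                  \prod_(k.+1 <= l < j.+1) Tvar p l)
      else 0
  end.

Definition EsigN (p : nat) (e : rel 'I_p) (s : {perm 'I_p}) (i j : nat) : bool :=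
  match @insub nat (fun x => x < p)%N 'I_p i, @insub nat (fun x => x < p)%N 'I_p j with
  | Some oi, Some oj => Esig e s oi oj
  | _, _ => false
  end.

(* The entry L_{ij} (i > j) of the modified Cholesky factor, as a polynomial
   in the free entries L_I and Dtilde_1^{-1},...,Dtilde_p^{-1}, obtained by
   recursive substitution of the zero constraints, with like terms collected. *)
Definition Lpoly (p : nat) (e : rel 'I_p) (s : {perm 'I_p}) (i j : nat) : Poly p :=
  Lfun p (EsigN e s) j.+1 i j.

Definition PropertyA (p : nat) (e : rel 'I_p) (s : {perm 'I_p}) : Prop :=
  forall i j : 'I_p, (j < i)%N -> ~~ Esig e s i j ->
    forall m : 'X_{1..nvars p}, m \in msupp (Lpoly e s i j) ->
      forall k : 'I_(nvars p), (k < p * p)%N -> (m k <= 1)%N.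

Definition PropertyB (p : nat) (e : rel 'I_p) (s : {perm 'I_p}) : Prop :=
  forall i j : 'I_p, (j < i)%N -> ~~ Esig e s i j ->
    forall m : 'X_{1..nvars p}, m \in msupp (Lpoly e s i j) ->
      forall k : 'I_(nvars p), (p * p <= k)%N -> (m k <= 1)%N.

(* Triangulation: fill n = E^sigma_n (steps n = 1..p-2 eliminate the vertex
   at 0-based position n-1). *)
Fixpoint fill (p : nat) (e : rel 'I_p) (s : {perm 'I_p}) (n : nat) : rel 'I_p :=
  match n with
  | 0 => e
  | n'.+1 => fun u v =>
      fill e s n' u v ||
      [&& u != v, (n' < s u)%N, (n' < s v)%N &
          [exists w, [&& (nat_of_ord (s w) == n'), fill e s n' u w & fill e s n' v w]]]
  end.

Definition Dsig (p : nat) (e : rel 'I_p) (s : {perm 'I_p}) : rel 'I_p :=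
  fill e s (p - 2).

Definition GB_ordering (p : nat) (e : rel 'I_p) (s : {perm 'I_p}) : Prop :=
  ~ exists u v w : 'I_p,
      [/\ ~~ e u v, ~~ e v w & ~~ e u w] /\ [/\ Dsig e s u v, Dsig e s v w & Dsig e s u w].

Definition GB_graph (p : nat) (e : rel 'I_p) : Prop :=
  exists s : {perm 'I_p}, GB_ordering e s.

(* Main.v *)
Require Import Defs.
From mathcomp Require Import all_boot all_order all_algebra fingroup perm.
From mathcomp Require Import mpoly.
From mathcomp Require Import lra zify.
Set Implicit Arguments. Unset Strict Implicit. Unset Printing Implicit Defensive.
Import Order.TTheory GRing.Theory Num.Theory.
Local Open Scope ring_scope.

Lemma Lfun_stable (p : nat) (E : nat -> nat -> bool) n i j :
  (j < n)%N -> Lfun p E n i j = Lfun p E j.+1 i j.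
Proof.
elim: n => [//|n IH] hj.
case: (ltnP j n) => h; first by rewrite /= h IH.
have -> : j = n by apply/eqP; rewrite eqn_leq h -ltnS hj.
by [].
Qed.

Lemma Lpoly_rec (p : nat) (e : rel 'I_p) (s : {perm 'I_p}) (i j : nat) :
  (j < i)%N ->
  Lpoly e s i j = if EsigN e s i j then Lvar p i j else
    - \sum_(0 <= k < j) (Lpoly e s i k * Lpoly e s j k *
                       \prod_(k.+1 <= l < j.+1) Tvar p l).
Proof.
move=> hji; rewrite /Lpoly /= ltnn eqxx.
rewrite (gtn_eqF hji) ltnNge (ltnW hji) /=.
case: (EsigN e s i j) => //; congr (- _).
apply: eq_big_nat => k /andP [_ hk].
by rewrite (@Lfun_stable _ _ _ i _ hk) (@Lfun_stable _ _ _ j _ hk).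
Qed.

Lemma EsigN_ord (p : nat) (e : rel 'I_p) (s : {perm 'I_p}) (i j : 'I_p) :
  EsigN e s i j = Esig e s i j.
Proof.
rewrite /EsigN (insubT (fun x => x < p)%N (ltn_ord i)) (insubT (fun x => x < p)%N (ltn_ord j)).
by congr (Esig e s _ _); apply: val_inj.
Qed.

Lemma Xn_ord p k (hk : (k < nvars p)%N) : Xn p k = 'X_(Ordinal hk).
Proof.
by rewrite /Xn (insubT (fun x => x < nvars p)%N hk); congr 'X_ _; apply: val_inj.
Qed.

Definition vN (p a : nat) (N : int) (k : nat) : int :=
  if (k < p * p)%N then -1 else if k == (p * p + a)%N then N else 1.
Definition vv (p a : nat) (N : int) : 'I_(nvars p) -> int := fun o => vN p a N o.
Arguments vv : clear implicits.
Definition W (p : nat) (e : rel 'I_p) (s : {perm 'I_p}) a N (i j : nat) : int :=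
  - meval (vv p a N) (Lpoly e s i j).
Definition tt (p a : nat) (N : int) (l : nat) : int := vN p a N (p * p + l).
Arguments tt : clear implicits.
Arguments vN : clear implicits.

Lemma W_rec (p : nat) (e : rel 'I_p) (s : {perm 'I_p}) a N (i j : nat) :
  (j < i)%N -> (i < p)%N ->
  W e s a N i j = if EsigN e s i j then 1 else
    \sum_(0 <= k < j) (W e s a N i k * W e s a N j k *
                       \prod_(k.+1 <= l < j.+1) tt p a N l).
Proof.
move=> hji hip; rewrite /W Lpoly_rec //.
case: (EsigN e s i j).
  have hk : (i * p + j < nvars p)%N.
    rewrite /nvars; nia.
  rewrite /Lvar Xn_ord mevalXU /vv /vN /=.
  have -> : (i * p + j < p * p)%N.
    by nia.
  by rewrite opprK.
rewrite mevalN opprK rmorph_sum /=; apply: eq_big_nat => k /andP [_ hk].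
rewrite !rmorphM /= mulrNN; congr (_ * _).
rewrite rmorph_prod /=; apply: eq_big_nat => l /andP [_ hl].
have hl' : (p * p + l < nvars p)%N.
  by rewrite /nvars ltn_add2l; apply: leq_trans hl _; apply: leq_trans hji (ltnW hip).
by rewrite /Tvar Xn_ord mevalXU.
Qed.

Lemma tt_ge1 p a (N : int) l : 1 <= N -> 1 <= tt p a N l.
Proof.
move=> hN; rewrite /tt /vN ltnNge leq_addr /=.
by case: ifP.
Qed.

Lemma tt_a p a (N : int) : tt p a N a = N.
Proof. by rewrite /tt /vN ltnNge leq_addr /= eqxx. Qed.

Lemma prod_tt_ge1 p a (N : int) m n : 1 <= N -> 1 <= \prod_(m <= l < n) tt p a N l.
Proof.
move=> hN; apply: (big_ind (fun x : int => 1 <= x)) => //.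
  by move=> x y; apply: mulr_ege1.
by move=> l _; apply: tt_ge1.
Qed.

Lemma W_ge0 (p : nat) (e : rel 'I_p) (s : {perm 'I_p}) a (N : int) :
  1 <= N -> forall j i, (j < i)%N -> (i < p)%N -> 0 <= W e s a N i j.
Proof.
move=> hN; elim/ltn_ind => j IH i hji hip.
rewrite W_rec //; case: (EsigN e s i j) => //.
rewrite big_mkord; apply: sumr_ge0 => [[k hk]] _ /=.
apply: mulr_ge0; first apply: mulr_ge0.
- by apply: IH => //; apply: ltn_trans hji.
- by apply: IH => //; apply: ltn_trans hip.
apply: prodr_ge0 => l _; apply: le_trans (tt_ge1 _ _ _ hN); done.
Qed.

Lemma sum_ge_term (F : nat -> int) j k0 :
  (k0 < j)%N -> (forall k, (k < j)%N -> 0 <= F k) -> F k0 <= \sum_(0 <= k < j) F k.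
Proof.
move=> hk hF; rewrite big_mkord (bigD1 (Ordinal hk)) //= lerDl.
by apply: sumr_ge0 => i _; apply: hF.
Qed.

Lemma EsigN_perm (p : nat) (e : rel 'I_p) (s : {perm 'I_p}) (u v : 'I_p) :
  EsigN e s (s u) (s v) = e u v.
Proof. by rewrite EsigN_ord /Esig !permK. Qed.

Lemma fill_W (p : nat) (e : rel 'I_p) (s : {perm 'I_p}) a (N : int) :
  1 <= N -> forall n u v, fill e s n u v -> (s v < s u)%N -> 1 <= W e s a N (s u) (s v).
Proof.
move=> hN; elim => [|n IH] u v /=.
  by move=> huv hlt; rewrite W_rec // EsigN_perm huv.
case/orP; first by apply: IH.
case/and4P => _ hu hv /existsP [w /and3P [/eqP hw huw hvw]] hlt.
rewrite W_rec //; case: (EsigN e s _ _) => //.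
have hwv : (s w < s v)%N by rewrite hw.
have H := @sum_ge_term (fun k => W e s a N (s u) k * W e s a N (s v) k *
   \prod_(k.+1 <= l < (s v).+1) tt p a N l) _ _ hwv.
apply: le_trans (H _).
  apply: mulr_ege1; last exact: prod_tt_ge1.
  apply: mulr_ege1.
  - by apply: IH => //; rewrite hw.
  - by apply: IH.
move=> k hk; apply: mulr_ge0; first apply: mulr_ge0.
- by apply: W_ge0 => //; apply: ltn_trans hlt.
- by apply: W_ge0.
by apply: prodr_ge0 => l _; apply: le_trans (tt_ge1 _ _ _ hN).
Qed.

Lemma fill_nonedge (p : nat) (e : rel 'I_p) (s : {perm 'I_p}) a (N : int) :
  1 <= N -> forall n u v, fill e s n u v -> (s v < s u)%N -> ~~ e u v ->
  exists w, [/\ (s w < s v)%N, 1 <= W e s a N (s u) (s w) & 1 <= W e s a N (s v) (s w)].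
Proof.
move=> hN; elim => [|n IH] u v /=.
  by move=> ->.
case/orP; first by apply: IH.
case/and4P => _ hu hv /existsP [w /and3P [/eqP hw huw hvw]] hlt _.
exists w; split; first by rewrite hw.
- by apply: (@fill_W _ _ _ a N hN _ _ _ huw); rewrite hw.
- by apply: (@fill_W _ _ _ a N hN _ _ _ hvw); rewrite hw.
Qed.

Lemma fill_sym (p : nat) (e : rel 'I_p) (s : {perm 'I_p}) :
  ssrbool.symmetric e -> forall n u v, fill e s n u v = fill e s n v u.
Proof.
move=> hs; elim => [|n IH] u v //=.
rewrite [fill e s n u v]IH eq_sym; congr (_ || _).
case: (v != u) => //=; case: (n < s u)%N; case: (n < s v)%N => //=.
by apply/existsP/existsP => -[w /and3P [h1 h2 h3]]; exists w; rewrite h1 h2 h3.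
Qed.

Lemma fill_irr (p : nat) (e : rel 'I_p) (s : {perm 'I_p}) :
  ssrbool.irreflexive e -> forall n u, fill e s n u u = false.
Proof.
by move=> hi; elim => [|n IH] u //=; rewrite IH eqxx.
Qed.

Lemma meval_upper (p a : nat) (N : int) (P : {mpoly int[nvars p]}) (ha : (p * p + a < nvars p)%N) :
  1 <= N ->
  (forall m, m \in msupp P -> (m (Ordinal ha) <= 1)%N) ->
  `|meval (vv p a N) P| <= (\sum_(m <- msupp P) `|P@_m|) * N.
Proof.
move=> hN hP; rewrite mevalE; apply: le_trans (ler_norm_sum _ _ _) _.
rewrite mulr_suml !big_seq; apply: ler_sum => m hm.
rewrite normrM ler_wpM2l //.
rewrite normr_prod (bigD1 (Ordinal ha)) //= normrX.
have -> : vv p a N (Ordinal ha) = N by rewrite /vv /vN /= ltnNge leq_addr /= eqxx.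
rewrite big1 ?mulr1; last first.
  move=> i hi; rewrite normrX.
  have -> : `|vv p a N i| = 1.
    rewrite /vv /vN; case: ifP => _; first by rewrite normrN normr1.
    case: eqP => h //; case/eqP: hi; apply: val_inj => /=; done.
  by rewrite expr1n.
have hm1 := hP m hm.
rewrite ger0_norm; last by apply: le_trans hN.
case: (m (Ordinal ha)) hm1 => [|[|//]] _; rewrite ?expr0 ?expr1 //.
Qed.

Lemma W_term (p : nat) (e : rel 'I_p) (s : {perm 'I_p}) a (N : int) i j k :
  1 <= N -> (k < j)%N -> (j < i)%N -> (i < p)%N -> ~~ EsigN e s i j ->
  W e s a N i k * W e s a N j k * \prod_(k.+1 <= l < j.+1) tt p a N l <= W e s a N i j.
Proof.
move=> hN hkj hji hip hE; rewrite (W_rec _ _ _ _ hji hip) (negbTE hE).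
have H := @sum_ge_term (fun k => W e s a N i k * W e s a N j k *
   \prod_(k.+1 <= l < j.+1) tt p a N l) _ _ hkj.
apply: H => k' hk'; apply: mulr_ge0; first apply: mulr_ge0.
- by apply: W_ge0 => //; apply: ltn_trans hji.
- by apply: W_ge0 => //; apply: ltn_trans hip.
by apply: prodr_ge0 => l _; apply: le_trans (tt_ge1 _ _ _ hN).
Qed.

Lemma W_geN (p : nat) (e : rel 'I_p) (s : {perm 'I_p}) (N : int) n (u v : 'I_p) :
  1 <= N -> fill e s n u v -> (s v < s u)%N -> ~~ e u v ->
  N <= W e s (s v) N (s u) (s v).
Proof.
move=> hN hf hlt he.
have [w [hw h1 h2]] := @fill_nonedge _ _ _ (s v) N hN _ _ _ hf hlt he.
have := @W_term _ e s (s v) N (s u) (s v) (s w) hN hw hlt (ltn_ord _).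
rewrite EsigN_perm he => /(_ isT); apply: le_trans.
rewrite big_nat_recr //= tt_a.
have hp := @prod_tt_ge1 p (s v) N (s w).+1 (s v) hN.
have h3 : 1 <= W e s (s v) N (s u) (s w) * W e s (s v) N (s v) (s w) by apply: mulr_ege1.
move: h3 hp; set A := (_ * _); set B := \prod_(_ <= _ < _) _ => h3 hp.
have hN0 : 0 <= N by apply: le_trans hN.
have hBN : N <= B * N by apply: ler_peMl.
apply: le_trans hBN _; apply: ler_peMl => //.
by apply: mulr_ge0 => //; apply: le_trans hp.
Qed.

Lemma arith (S N A B C Q : int) : 0 <= S -> N = S + 1 -> N <= A -> N <= B ->
  A * B * Q <= C -> 1 <= Q -> C <= S * N -> False.
Proof.
move=> hS hNd h1 h2 h3 hp hC.
have hN : 1 <= N by rewrite hNd lerDr.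
have hN0 : 0 <= N by apply: le_trans hN.
have hAB : N * N <= A * B by apply: ler_pM.
have hA0 : 0 <= A by apply: le_trans h1.
have hB0 : 0 <= B by apply: le_trans h2.
have hABQ : A * B <= A * B * Q by apply: ler_peMr => //; apply: mulr_ge0.
have : N * N <= S * N by apply: le_trans hAB (le_trans hABQ (le_trans h3 hC)).
rewrite ler_pM2r; last by apply: lt_le_trans hN.
by rewrite hNd; lra.
Qed.

Lemma core (p : nat) (e : rel 'I_p) (s : {perm 'I_p}) n (x y z : 'I_p) :
  (s z < s y)%N -> (s y < s x)%N ->
  ~~ e x z -> ~~ e y z -> ~~ e x y ->
  fill e s n x z -> fill e s n y z -> fill e s n x y ->
  PropertyB e s -> False.
Proof.
move=> hzy hyx exz eyz exy fxz fyz fxy hB.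
set P := Lpoly e s (s x) (s y).
set S := \sum_(m <- msupp P) `|P@_m|.
have hS : 0 <= S by apply: sumr_ge0 => m _.
set N := S + 1.
have hN : 1 <= N by rewrite /N lerDr.
have ha : (p * p + s z < nvars p)%N by rewrite /nvars ltn_add2l.
have hup := @meval_upper p (s z) N P ha hN.
have hEs : ~~ Esig e s (s x) (s y) by rewrite /Esig !permK.
have {hup} hup : `|W e s (s z) N (s x) (s y)| <= S * N.
  rewrite /W normrN; apply: hup => m hm.
  exact: (hB (s x) (s y) hyx hEs m hm (Ordinal ha) (leq_addr _ _)).
have h1 := W_geN hN fxz (ltn_trans hzy hyx) exz.
have h2 := W_geN hN fyz hzy eyz.
have h3 := @W_term _ e s (s z) N (s x) (s y) (s z) hN hzy hyx (ltn_ord _).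
rewrite EsigN_perm exy in h3; have {h3} h3 := h3 isT.
have hp := @prod_tt_ge1 p (s z) N (s z).+1 (s y).+1 hN.
have hC : W e s (s z) N (s x) (s y) <= S * N by apply: le_trans (ler_norm _) hup.
exact: (arith hS erefl h1 h2 h3 hp hC).
Qed.

Theorem theorem4 (p : nat) (e : rel 'I_p) (s : {perm 'I_p}) :
  simple_graph e ->
  PropertyA e s -> PropertyB e s ->
  GB_graph e /\ GB_ordering e s.
Proof.
move=> [hirr hsym] _ hB.
suff hGB : GB_ordering e s by split => //; exists s.
move=> [u [v [w [[euv evw euw] [duv dvw duw]]]]].
rewrite /Dsig in duv dvw duw.
move: (p - 2)%N duv dvw duw => n duv dvw duw.
have fsym := fill_sym s hsym n.
have esym : forall a b, e a b = e b a by move=> a b; apply: hsym.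
set L := [:: u; v; w].
have ne : forall a b, a \in L -> b \in L -> a != b -> ~~ e a b /\ fill e s n a b.
  move=> a b; rewrite !inE.
  by case/or3P => /eqP -> ; case/or3P => /eqP -> ; rewrite ?eqxx // => _;
    rewrite ?(esym v u) ?(esym w v) ?(esym w u) ?(fsym v u) ?(fsym w v) ?(fsym w u).
have G : forall x y z, x \in L -> y \in L -> z \in L ->
    (s z < s y)%N -> (s y < s x)%N -> False.
  move=> x y z hx hy hz h1 h2.
  have xy : x != y by apply/eqP => exy; rewrite exy ltnn in h2.
  have yz : y != z by apply/eqP => eyz; rewrite eyz ltnn in h1.
  have xz : x != z by apply/eqP => exz; rewrite exz in h2; move: (ltn_trans h1 h2); rewrite ltnn.
  have [e1 f1] := ne _ _ hx hz xz.
  have [e2 f2] := ne _ _ hy hz yz.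
  have [e3 f3] := ne _ _ hx hy xy.
  exact: (core h1 h2 e1 e2 e3 f1 f2 f3 hB).
have hne : forall a b : 'I_p, fill e s n a b -> s a != s b.
  by move=> a b hab; apply/eqP => /perm_inj h; rewrite h fill_irr in hab.
have iu : u \in L by rewrite !inE eqxx.
have iv : v \in L by rewrite !inE eqxx orbT.
have iw : w \in L by rewrite !inE eqxx !orbT.
move: (hne _ _ duv) (hne _ _ dvw) (hne _ _ duw).
case: (ltngtP (s u) (s v)) => h1 n1;
case: (ltngtP (s v) (s w)) => h2 n2;
case: (ltngtP (s u) (s w)) => h3 n3.
all: try (exfalso; move/eqP: n1; apply; exact: val_inj h1).
all: try (exfalso; move/eqP: n2; apply; exact: val_inj h2).
all: try (exfalso; move/eqP: n3; apply; exact: val_inj h3).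
all: try (have := ltn_trans (ltn_trans h1 h2) h3; rewrite ltnn => H; discriminate H).
all: try (have := ltn_trans (ltn_trans h2 h1) h3; rewrite ltnn => H; discriminate H).
all: first [ by apply: (G w v u) | by apply: (G v w u) | by apply: (G w u v)
           | by apply: (G v u w) | by apply: (G u w v) | by apply: (G u v w) ].
Qed.
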